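(* Let $\Omega\subset\mathbb{R}^d$ be a bounded domain and $\mathcal{S}=\{(a_1,a_2,a_3)\in\mathbb{R}^3: a_i\ge0,\ a_1a_2a_3=0\}$. For $\mathbf v=(v_1,v_2,v_3)\in L^2(\Omega)^3$ define $\mathcal{P}\mathbf v$ pointwise by: at $x\in\Omega$, let $k^*(x)$ be the index $k\in\{1,2,3\}$ minimizing $(v_k(x))^+=\max\{v_k(x),0\}$, ties broken by choosing the smallest index, and set $(\mathcal P\mathbf v)_i(x)=(v_i(x))^+$ if $i\ne k^*(x)$ and $(\mathcal P\mathbf v)_{k^*(x)}(x)=0$. Then $\mathcal P\mathbf v\in L^2(\Omega)^3$, $\mathcal P\mathbf v(x)\in\mathcal S$ for a.e. $x\in\Omega$, and $$\|\mathbf v-\mathcal P\mathbf v\|_{L^2(\Omega)^3}^2=\min\big\{\|\mathbf v-\mathbf w\|_{L^2(\Omega)^3}^2:\ \mathbf w\in L^2(\Omega)^3,\ \mathbf w(x)\in\mathcal S\text{ a.e.}\big\}.$$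
   Context: $\|\mathbf v\|_{L^2(\Omega)^3}^2=\int_\Omega\sum_{i=1}^3|v_i(x)|^2\,dx$. *)

(* Defs.v *)
From HB Require Import structures.
From mathcomp Require Import all_boot all_order all_algebra.
From mathcomp Require Import all_classical all_reals all_analysis.
Set Implicit Arguments. Unset Strict Implicit. Unset Printing Implicit Defensive.
Import Order.TTheory GRing.Theory Num.Theory.
Import numFieldNormedType.Exports.
Local Open Scope classical_set_scope.
Local Open Scope ring_scope.

(* Points of R^d are represented as d-tuples (these carry the product
   sigma-algebra of the library); for topological notions we transport them
   to row vectors 'rV[R]_d, which carry the usual normed topology. *)
Definition tup2rv {R : realType} {d : nat} (t : d.-tuple R) : 'rV[R]_d :=
  \row_i tnth t i.

Definition bounded_domain (R : realType) (d : nat) (Omega : set (d.-tuple R)) :=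
  [/\ Omega !=set0, open (tup2rv @` Omega), connected (tup2rv @` Omega)
    & bounded_set (tup2rv @` Omega)].

(* mu is Lebesgue measure on R^d: it gives every closed box its volume
   (this characterizes Lebesgue measure on the product sigma-algebra). *)
Definition is_lebesgue_measure (R : realType) (d : nat)
    (mu : set (d.-tuple R) -> \bar R) :=
  forall a b : d.-tuple R, (forall i, tnth a i <= tnth b i) ->
    mu [set t | forall i, tnth a i <= tnth t i <= tnth b i] =
    (\prod_(i < d) (tnth b i - tnth a i))%:E.

Definition inS (R : realType) (a : 'I_3 -> R) : Prop :=
  (forall i, 0 <= a i) /\ \prod_(i < 3) a i = 0.

Definition L2fun (R : realType) (d : nat) (mu : set (d.-tuple R) -> \bar R)
    (Omega : set (d.-tuple R)) (f : d.-tuple R -> R) : Prop :=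
  measurable_fun Omega f /\
  (\int[mu]_(x in Omega) ((f x) ^+ 2)%:E < +oo)%E.

Definition dist2 (R : realType) (d : nat) (mu : set (d.-tuple R) -> \bar R)
    (Omega : set (d.-tuple R)) (v w : 'I_3 -> d.-tuple R -> R) : \bar R :=
  \int[mu]_(x in Omega) (\sum_(i < 3) (v i x - w i x) ^+ 2)%:E.

Definition k1 : 'I_3 := @Ordinal 3 1 isT.
Definition k2 : 'I_3 := @Ordinal 3 2 isT.

Definition kstar (R : realType) (d : nat) (v : 'I_3 -> d.-tuple R -> R)
    (x : d.-tuple R) : 'I_3 :=
  let p := fun k => Num.max (v k x) 0 in
  if (p ord0 <= p k1) && (p ord0 <= p k2) then ord0
  else if p k1 <= p k2 then k1 else k2.

Definition Pproj (R : realType) (d : nat) (v : 'I_3 -> d.-tuple R -> R) :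
    'I_3 -> d.-tuple R -> R :=
  fun i x => if i == kstar v x then 0 else Num.max (v i x) 0.

(* Main.v *)
Require Import Defs.
From HB Require Import structures.
From mathcomp Require Import all_boot all_order all_algebra.
From mathcomp Require Import all_classical all_reals all_analysis.
From mathcomp Require Import measurable_realfun ring lra.
Import Order.TTheory GRing.Theory Num.Theory.
Local Open Scope classical_set_scope.
Local Open Scope ring_scope.

Lemma sq_split (R : realType) (y : R) :
  y ^+ 2 = (y - Num.max y 0) ^+ 2 + (Num.max y 0) ^+ 2.
Proof. rewrite maxEle; case: ifP => _; ring. Qed.

Lemma sq_le (R : realType) (y w : R) : 0 <= w ->
  (y - Num.max y 0) ^+ 2 <= (y - w) ^+ 2.
Proof.
move=> w0; rewrite maxEle; case: ifP => h.
  rewrite subr0; nra.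
by rewrite subrr expr0n /= sqr_ge0.
Qed.

Lemma pw (R : realType) (a w : 'I_3 -> R) (k : 'I_3) :
  (forall j, Num.max (a k) 0 <= Num.max (a j) 0) -> inS w ->
  \sum_i (a i - (if i == k then 0 else Num.max (a i) 0)) ^+ 2
  <= \sum_i (a i - w i) ^+ 2.
Proof.
move=> kmin [w0 wp].
have /prodf_eq0 [j _ /eqP wj] : \prod_(i < 3) w i == 0 by rewrite wp.
pose p i := Num.max (a i) 0.
have e i : (a i - (if i == k then 0 else p i)) ^+ 2 =
    (a i - p i) ^+ 2 + (if i == k then p i ^+ 2 else 0).
  by case: eqP => _; rewrite ?subr0 ?addr0 // -sq_split.
have ineq i : (a i - p i) ^+ 2 + (if i == j then p i ^+ 2 else 0)
    <= (a i - w i) ^+ 2.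
  case: eqP => [->|_]; first by rewrite wj subr0 -sq_split.
  by rewrite addr0 sq_le.
rewrite (eq_bigr _ (fun i _ => e i)) big_split /=.
apply: le_trans (ler_sum _ (fun i _ => ineq i)).
rewrite big_split /= lerD2l -!big_mkcond /= !big_pred1_eq.
have h1 := kmin j; have h2 : 0 <= p k by rewrite /p le_max lexx orbT.
rewrite /p in h2 *; nra.
Qed.

Lemma ord3_cases (j : 'I_3) : j = ord0 \/ j = k1 \/ j = k2.
Proof.
case: j => [[|[|[|n]]] Hj].
- by left; apply/val_inj.
- by right; left; apply/val_inj.
- by right; right; apply/val_inj.
- by [].
Qed.

Lemma kstar_min (R : realType) (d : nat) (v : 'I_3 -> d.-tuple R -> R) x j :
  Num.max (v (kstar v x) x) 0 <= Num.max (v j x) 0.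
Proof.
rewrite /kstar.
have [->|[->|->]] := ord3_cases j.
- case: ifP => [_|/negbT]; first by rewrite lexx.
  rewrite negb_and -!ltNge => /orP[h|h]; case: ifP => h'; lra.
- case: ifP => [/andP[h h']|/negbT]; first by [].
  rewrite negb_and -!ltNge => /orP[h|h]; case: ifP => h'; lra.
- case: ifP => [/andP[h h']|/negbT]; first by [].
  rewrite negb_and -!ltNge => /orP[h|h]; case: ifP => h'; lra.
Qed.

Lemma eq_kstar (R : realType) (d : nat) (v : 'I_3 -> d.-tuple R -> R) i x :
  (i == kstar v x) =
  let p := fun k => Num.max (v k x) 0 in
  let c0 := (p ord0 <= p k1) && (p ord0 <= p k2) in
  let c1 := p k1 <= p k2 in
  if i == ord0 then c0 else if i == k1 then ~~ c0 && c1 else ~~ c0 && ~~ c1.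
Proof.
rewrite /kstar /=.
have [->|[->|->]] := ord3_cases i.
- by case: ifP => //; case: ifP.
- by case: ifP => //; case: ifP.
- by case: ifP => //; case: ifP.
Qed.

Import HBNNSimple.
Lemma int_ae_le d (T : measurableType d) (R : realType)
  (mu : {measure set T -> \bar R}) (D N : set T) (f g : T -> \bar R) :
  measurable N -> mu N = 0%E ->
  (forall x, D x -> (0 <= f x)%E) -> (forall x, D x -> (0 <= g x)%E) ->
  (forall x, D x -> ~ N x -> (f x <= g x)%E) ->
  (\int[mu]_(x in D) f x <= \int[mu]_(x in D) g x)%E.
Proof.
move=> mN muN f0 g0 fg.
rewrite (ge0_integralE _ f0) (ge0_integralE _ g0).
apply: ge_ereal_sup => _ [h /= hf <-].
have mCN : measurable (~` N) by exact: measurableC.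
apply: ereal_sup_ubound => /=.
exists (proj_nnsfun h mCN).
  move=> x /=; rewrite /= /patch measurable_realfun.mindicE.
  case: (boolP (x \in ~` N)) => xN; rewrite ?mulr1 ?mulr0.
    case: ifP => Dx.
      have := hf x; rewrite /patch Dx => /le_trans; apply.
      apply: fg; first by rewrite inE in Dx.
      by rewrite inE in xN.
    by have := hf x; rewrite /patch Dx.
  by case: ifP => // Dx; apply: g0; rewrite inE in Dx.
rewrite -mrestrict -integral_nnsfun //.
have -> : sintegral mu h = (\int[mu]_(x in setT) (h x)%:E)%E.
  by rewrite integral_nnsfun // patch_setT.
rewrite (@ge0_negligible_integral _ _ _ _ setT N) //.
- by rewrite setTD.
- apply/measurable_EFinP; exact: measurable_funPT.
- by move=> x _; rewrite lee_fin.
Qed.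

Theorem lemma3p13 (R : realType) (d : nat)
  (mu : {measure set (d.-tuple R) -> \bar R}) (Omega : set (d.-tuple R))
  (v : 'I_3 -> d.-tuple R -> R) :
  is_lebesgue_measure mu ->
  bounded_domain Omega ->
  (forall i, L2fun mu Omega (v i)) ->
  [/\ (forall i, L2fun mu Omega (Pproj v i)),
      {ae mu, forall x, Omega x -> inS (fun i => Pproj v i x)} &
      forall w : 'I_3 -> d.-tuple R -> R,
        (forall i, L2fun mu Omega (w i)) ->
        {ae mu, forall x, Omega x -> inS (fun i => w i x)} ->
        (dist2 mu Omega v (Pproj v) <= dist2 mu Omega v w)%E].
Proof.
move=> _ _ hv.
have Pge0 i x : 0 <= Pproj v i x.
  by rewrite /Pproj; case: ifP => // _; rewrite le_max lexx orbT.
split.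
- move=> i; split.
    move=> mO; move: (mO); rewrite /Pproj.
    apply: measurable_fun_if => //.
    + under eq_fun do rewrite eq_kstar /=.
      have mp k : measurable_fun Omega (fun x => Num.max (v k x) 0).
        apply: measurable_maxr; [exact: (hv k).1|exact: measurable_cst].
      have mc0 : measurable_fun Omega (fun x =>
         (Num.max (v ord0 x) 0 <= Num.max (v k1 x) 0) &&
         (Num.max (v ord0 x) 0 <= Num.max (v k2 x) 0)).
        by apply: measurable_and; apply: measurable_fun_ler.
      have mc1 : measurable_fun Omega (fun x =>
         (Num.max (v k1 x) 0 <= Num.max (v k2 x) 0)).
        exact: measurable_fun_ler.
      case: (i == ord0) => //; case: (i == k1).
        by apply: measurable_and => //; apply: measurable_neg.
      by apply: measurable_and; apply: measurable_neg.
    + apply: (measurable_funS mO); first exact: subIsetl.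
      apply: measurable_maxr; [exact: (hv i).1|exact: measurable_cst].
  apply: le_lt_trans (hv i).2.
  apply: (@int_ae_le _ _ _ _ _ set0) => //.
  + by move=> x _; rewrite lee_fin sqr_ge0.
  + by move=> x _; rewrite lee_fin sqr_ge0.
  + move=> x _ _; rewrite lee_fin /Pproj; case: ifP => _.
      by rewrite expr0n /= sqr_ge0.
    rewrite maxEle; case: ifP => _; last by [].
    by rewrite expr0n /= sqr_ge0.
- apply: aeW => x _; split => //.
  by apply/eqP/prodf_eq0; exists (kstar v x) => //; rewrite /Pproj eqxx.
- move=> w _ [N [mN muN sub]].
  apply: (@int_ae_le _ _ _ _ _ N) => //.
  + by move=> x _; rewrite lee_fin sumr_ge0 // => i _; rewrite sqr_ge0.
  + by move=> x _; rewrite lee_fin sumr_ge0 // => i _; rewrite sqr_ge0.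
  + move=> x Ox Nx; rewrite lee_fin.
    have wS : inS (fun i => w i x).
      apply: contrapT => h; apply: Nx; apply: sub => /=; tauto.
    rewrite /Pproj; apply: (@pw R (fun i => v i x) (fun i => w i x) (kstar v x)).
    exact: kstar_min. exact: wS.
Qed.
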